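(* Let $m$ and $n$ be positive integers. Then $$\frac{1-q}{1-q^{m+n}}{m+n-2\brack m-1}_q{n\brack m}_q{2n\brack n}_q$$ is a polynomial in $q$ with non-negative integer coefficients.
   Context: The $q$-binomial coefficients are defined by ${n\brack k}_q=\prod_{i=1}^{k}\frac{1-q^{n-k+i}}{1-q^i}$ if $0\le k\le n$, and ${n\brack k}_q=0$ otherwise. *)

(* Defs.v *)
(* q-binomials as rational functions in q, i.e. elements of
   the field of fractions of Z[q], defined literally as the product in the paper. *)
From HB Require Import structures.
From mathcomp Require Import all_boot all_order all_algebra.
Set Implicit Arguments. Unset Strict Implicit. Unset Printing Implicit Defensive.
Import GRing.Theory.
Local Open Scope ring_scope.

Notation "x %:F" := (@FracField.tofrac _ x) : ring_scope.
Definition qvar : {fraction {poly int}} := ('X : {poly int})%:F.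

Definition qbin (n k : nat) : {fraction {poly int}} :=
  if (k <= n)%N then
    \prod_(i < k) ((1 - qvar ^+ (n - k + i.+1)%N) / (1 - qvar ^+ i.+1))
  else 0.

(* Main.v *)
Require Import Defs.
From HB Require Import structures.
From mathcomp Require Import all_boot all_order all_algebra.
From mathcomp Require Import ring zify.
Import GRing.Theory Num.Theory.
Local Open Scope ring_scope.

Definition nonneg (p : {poly int}) := forall i : nat, 0 <= p`_i.

Lemma nonneg0 : nonneg 0. Proof. by move=> i; rewrite coef0. Qed.
Lemma nonneg1 : nonneg 1. Proof. by move=> i; rewrite coef1; case: (i == 0)%N. Qed.
Lemma nonnegD p q : nonneg p -> nonneg q -> nonneg (p + q).
Proof. by move=> hp hq i; rewrite coefD addr_ge0. Qed.
Lemma nonnegM p q : nonneg p -> nonneg q -> nonneg (p * q).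
Proof. by move=> hp hq i; rewrite coefM; apply: sumr_ge0 => j _; rewrite mulr_ge0. Qed.
Lemma nonnegXn k : nonneg 'X^k.
Proof. by move=> i; rewrite coefXn; case: (i == k). Qed.

Fixpoint Hn (r : nat) : nat -> {poly int} :=
  match r with
  | 0 => fun _ => 1%R
  | r'.+1 => fix h (k : nat) : {poly int} :=
      match k with 0 => 1%R | k'.+1 => (Hn r' k + ('X^r : {poly int}) * h k')%R end
  end.

Lemma Hn0k k : Hn 0 k = 1. Proof. by []. Qed.
Lemma Hnr0 r : Hn r 0 = 1. Proof. by case: r. Qed.
Lemma HnSS r k : Hn r.+1 k.+1 = Hn r k.+1 + 'X^(r.+1) * Hn r.+1 k. Proof. by []. Qed.

Lemma nonnegHn r k : nonneg (Hn r k).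
Proof.
elim: r k => [|r IH] k; first exact: nonneg1.
elim: k => [|k IHk]; first exact: nonneg1.
by rewrite HnSS; apply: nonnegD => //; apply: nonnegM => //; apply: nonnegXn.
Qed.

Definition S (r c j : nat) : {poly int} :=
  Hn r c * Hn r j - (if j is j'.+1 then Hn r c.+1 * Hn r j' else 0).
Definition B (r c j : nat) : {poly int} :=
  Hn r c * Hn r.+1 j - (if j is j'.+1 then Hn r c.+1 * Hn r.+1 j' else 0).

Lemma I1 r c j : B r c j.+1 = S r c j.+1 + 'X^(r.+1) * B r c j.
Proof.
rewrite /B /S; case: j => [|j].
  rewrite HnSS !Hnr0; ring.
rewrite !HnSS; ring.
Qed.

Lemma I2 r c j : S r.+1 c.+1 j = B r c.+1 j + 'X^(r.+1) * S r.+1 c j.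
Proof.
rewrite /B /S; case: j => [|j].
  by rewrite !Hnr0 HnSS; ring.
by rewrite (HnSS r c.+1) (HnSS r c); ring.
Qed.

Lemma Sdiag r j : S r j j.+1 = 0.
Proof. by rewrite /S mulrC subrr. Qed.

Lemma Spos r : forall c j, (j <= c)%N -> exists p, nonneg p /\ S r c j = 'X^j * p.
Proof.
elim: r => [|r IH] c j hjc.
  case: j hjc => [|j] _.
    by exists 1; split; [exact: nonneg1 | rewrite /S /= expr0 !mul1r subr0].
  by exists 0; split; [exact: nonneg0 | rewrite /S /= mulr0 mul1r subrr].
have Bpos : forall c j, (j <= c)%N -> exists p, nonneg p /\ B r c j = 'X^j * p.
  move=> c0; elim=> [|j' IHj] hj.
    exists (Hn r c0); split; first exact: nonnegHn.
    by rewrite /B Hnr0 expr0 mul1r mulr1 subr0.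
  have [p1 [h1 e1]] := IH c0 j'.+1 hj.
  have [p2 [h2 e2]] := IHj (ltnW hj).
  exists (p1 + 'X^r * p2); split.
    by apply: nonnegD => //; apply: nonnegM => //; apply: nonnegXn.
  rewrite I1 e1 e2 !exprS; ring.
elim: c j hjc => [|c IHc] j hjc.
  move: hjc; rewrite leqn0 => /eqP ->.
  by exists 1; split; [exact: nonneg1 | rewrite /S Hnr0 expr0 !mul1r subr0].
rewrite I2.
have [pB [hB eB]] := Bpos c.+1 j hjc.
case: (ltngtP j c.+1) hjc => // [hlt|heq] _.
  have [pS [hS eS]] := IHc j hlt.
  exists (pB + 'X^(r.+1) * pS); split.
    by apply: nonnegD => //; apply: nonnegM => //; apply: nonnegXn.
  rewrite eB eS; ring.
move: eB; rewrite heq Sdiag mulr0 addr0 => ->.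
by exists pB.
Qed.

Definition qf (k : nat) : {fraction {poly int}} := \prod_(i < k) (1 - qvar ^+ i.+1).

Lemma qfS k : qf k.+1 = qf k * (1 - qvar ^+ k.+1).
Proof. by rewrite /qf big_ord_recr. Qed.

Lemma qf0 : qf 0 = 1. Proof. by rewrite /qf big_ord0. Qed.

Lemma onesub_neq0 k : 1 - qvar ^+ k.+1 != 0.
Proof.
rewrite /qvar -tofracXn -tofrac1 -tofracB tofrac_eq0.
apply/eqP => h; have := congr1 (fun p : {poly int} => p`_k.+1) h.
by rewrite coefB coef1 coefXn coef0 eqxx.
Qed.

Lemma qf_neq0 k : qf k != 0.
Proof.
elim: k => [|k IH]; first by rewrite qf0; apply: oner_neq0.
rewrite qfS; exact: (mulf_neq0 IH (onesub_neq0 k)).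
Qed.

Lemma qfD a k : qf (a + k) = qf a * \prod_(i < k) (1 - qvar ^+ (a + i.+1)).
Proof.
elim: k => [|k IH]; first by rewrite addn0 big_ord0 mulr1.
by rewrite addnS qfS IH big_ord_recr /= mulrA addnS.
Qed.

Lemma fl1 (F : fieldType) (a b c : F) : a != 0 -> b != 0 -> c / a = b * c / (a * b).
Proof. move=> ha hb. field. by rewrite ha hb. Qed.

Lemma qbinE n k : (k <= n)%N -> qbin n k = qf n / (qf k * qf (n - k)).
Proof.
move=> hk; rewrite /qbin hk prodf_div.
have e := qfD (n - k) k; rewrite subnK // in e.
rewrite e -/(qf k).
have h1 := qf_neq0 k; have h2 := qf_neq0 (n - k).
exact: (@fl1 _ (qf k) (qf (n - k)) _ h1 h2).
Qed.

Lemma qbin0 n k : (n < k)%N -> qbin n k = 0.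
Proof. by rewrite /qbin ltnNge => /negbTE ->. Qed.

Lemma stepl (F : comNzRingType) (h1 h2 qr qk Q a b : F) :
  h1 * (qr * (qk * (1 - b))) = Q -> h2 * ((qr * (1 - a)) * qk) = Q ->
  (h1 + a * h2) * ((qr * (1 - a)) * (qk * (1 - b))) = Q * (1 - a * b).
Proof.
move=> e1 e2.
have -> : (h1 + a * h2) * ((qr * (1 - a)) * (qk * (1 - b))) =
   h1 * (qr * (qk * (1 - b))) * (1 - a) + a * (1 - b) * (h2 * ((qr * (1 - a)) * qk)) by ring.
rewrite e1 e2; ring.
Qed.

Lemma tofracX k : ('X^k : {poly int})%:F = qvar ^+ k.
Proof. by rewrite tofracXn. Qed.

Lemma Hn_frac r k : (Hn r k)%:F * (qf r * qf k) = qf (r + k).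
Proof.
elim: r k => [|r IH] k.
  by rewrite Hn0k tofrac1 qf0 !mul1r add0n.
elim: k => [|k IHk].
  by rewrite Hnr0 tofrac1 qf0 mulr1 mul1r addn0.
rewrite HnSS tofracD tofracM tofracX.
have e1 := IH k.+1. rewrite (qfS k) in e1.
rewrite (qfS r) addSnnS in IHk.
have E : qf (r.+1 + k.+1) = qf (r + k.+1) * (1 - qvar ^+ r.+1 * qvar ^+ k.+1).
  by rewrite -exprD addSn qfS.
rewrite E (qfS r) (qfS k).
exact: (@stepl {fraction {poly int}} _ _ _ _ _ _ _ e1 IHk).
Qed.

Lemma key (F : fieldType) (w y z A N1 C0 D Q2 qc qc1 qn q21 q22 P : F) :
 A != 0 -> N1 != 0 -> C0 != 0 -> D != 0 -> 1 - y*w != 0 -> 1 - y*w^+2 != 0 ->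
 1 - y*z*w^+2 != 0 -> 1 - y^+2*z*w^+3 != 0 -> 1 - y^+2*z*w^+4 != 0 ->
 qc = C0*(1-y*w) -> qc1 = qc*(1-y*w^+2) -> qn = N1*(1-y*z*w^+2) ->
 q21 = A*(1-y^+2*z*w^+3) -> q22 = q21*P -> P = 1 - y^+2*z*w^+4 ->
 y*w * ((1-w)/P * (A/(qc*N1)) * (qn/(qc1*D)) * (Q2/(qn*qn))) =
 (q21/(qn*qc) * (q21/(qn*qc)) - q22/(qn*qc1) * (A/(qn*C0))) * (Q2/(D*q22)).
Proof.
move=> hA hN hC hD h1 h2 h3 h4 h5 -> -> -> -> -> ->.
field. by rewrite hA hN hC hD h1 h2 h3 h4 h5.
Qed.
Lemma key0 (F : fieldType) (w z D Q2 q1 qn qn1 qn2 P : F) :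
 D != 0 -> 1 - w != 0 -> 1 - z*w != 0 -> 1 - z*w^+2 != 0 ->
 q1 = 1 - w -> qn = D*(1-z*w) -> qn1 = qn * P -> P = 1 - z*w^+2 ->
 ((1-w)/P * 1 * (qn/(q1*D)) * (Q2/(qn*qn))) = (Q2/(D*qn1)).
Proof.
move=> hD h1 h2 h3 -> -> -> ->.
field. by rewrite hD h1 h2 h3.
Qed.

Lemma Hn_frac' r k : (Hn r k)%:F = qf (r + k) / (qf r * qf k).
Proof.
rewrite -(Hn_frac r k).
exact: (esym (mulfK (mulf_neq0 (qf_neq0 r) (qf_neq0 k)) _)).
Qed.

Lemma qvar_neq0 : qvar != 0.
Proof. by rewrite /qvar tofrac_eq0 polyX_eq0. Qed.

Lemma qbin_0 n : qbin n 0 = 1.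
Proof. by rewrite /qbin big_ord0. Qed.

Lemma onesub_neq0' k e : e = qvar ^+ k.+1 -> 1 - e != 0.
Proof. by move=> ->; exact: onesub_neq0. Qed.

Theorem theorem3 (m n : nat) : (0 < m)%N -> (0 < n)%N ->
  exists p : {poly int},
    (forall i : nat, 0 <= p`_i) /\
    FracField.tofrac p = (1 - qvar) / (1 - qvar ^+ (m + n)) * qbin (m + n - 2) (m - 1)
           * qbin n m * qbin (2 * n) n.
Proof.
move=> hm hn.
case: (leqP m n) => hmn; last first.
  exists 0; split; first exact: nonneg0.
  by rewrite tofrac0 (@qbin0 n m hmn) mulr0 mul0r.
have [c em] : exists c, m = c.+1 by exists m.-1; lia.
have [d en] : exists d, n = (m + d)%N by exists (n - m)%N; lia.
have [p0 [hp0 ep0]] := Spos n c c (leqnn c).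
exists (p0 * Hn d (m + n)); split.
  by apply: nonnegM => //; exact: nonnegHn.
have hx : qvar ^+ c != 0 := expf_neq0 c qvar_neq0.
apply: (mulfI hx).
rewrite tofracM mulrA -tofracX -tofracM -ep0.
symmetry.
have h2n : (n <= 2 * n)%N by lia.
rewrite (@qbinE n m hmn) (@qbinE (2 * n) n h2n) Hn_frac'.
have e10 : (d + (m + n) = 2 * n)%N by lia.
have e6 : (2 * n - n = n)%N by lia.
have e5 : (n - m = d)%N by lia.
rewrite e10 e6 e5.
case: c em hx ep0 => [|c'] em hx ep0.
  have S00 : S n 0 0 = 1 by rewrite /S Hnr0 mulr1 subr0.
  have em1 : (m - 1 = 0)%N by lia.
  rewrite expr0 mul1r em1 qbin_0 S00 tofrac1 mul1r.
  have e1 : (m + n = d.+2)%N by lia.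
  have e2 : (n = d.+1)%N by lia.
  rewrite e1 em e2.
  apply: (@key0 _ qvar (qvar ^+ d) (qf d) (qf (2 * d.+1)) (qf 1) (qf d.+1) (qf d.+2) (1 - qvar ^+ d.+2)).
  - exact: qf_neq0.
  - by apply: (@onesub_neq0' 0); rewrite expr1.
  - by apply: (@onesub_neq0' d); rewrite -exprSr.
  - by apply: (@onesub_neq0' d.+1); rewrite -exprD addn2.
  - by rewrite qfS qf0 mul1r expr1.
  - by rewrite qfS exprSr.
  - by rewrite qfS.
  - by rewrite -exprD addn2.
have hmm : (m - 1 <= m + n - 2)%N by lia.
rewrite (@qbinE _ _ hmm).
rewrite /S tofracB !tofracM !Hn_frac'.
have e4 : (m + n - 2 - (m - 1) = (c'+d).+1)%N by lia.
have e2 : (m + n - 2 = (c'+c'+d).+2)%N by lia.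
have e1 : (m + n = (c'+c'+d).+4)%N by lia.
have e3 : (m - 1 = c'.+1)%N by lia.
have e7 : (n + c'.+1 = (c'+c'+d).+3)%N by lia.
have e8 : (n + c'.+2 = (c'+c'+d).+4)%N by lia.
have e9 : (n + c' = (c'+c'+d).+2)%N by lia.
rewrite e4 e2 e1 e3 e7 e8 e9 em.
have en' : (n = (c' + d).+2)%N by lia.
rewrite en' tofracX [qvar ^+ c'.+1]exprSr.
apply: (@key _ qvar (qvar ^+ c') (qvar ^+ d) (qf (c' + c' + d).+2) (qf (c' + d).+1)
  (qf c') (qf d) (qf (2 * (c' + d).+2)) (qf c'.+1) (qf c'.+2) (qf (c' + d).+2)
  (qf (c' + c' + d).+3) (qf (c' + c' + d).+4) (1 - qvar ^+ (c' + c' + d).+4)).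
- exact: qf_neq0.
- exact: qf_neq0.
- exact: qf_neq0.
- exact: qf_neq0.
- by apply: (@onesub_neq0' c'); rewrite -exprSr.
- by apply: (@onesub_neq0' c'.+1); rewrite -exprD addn2.
- by apply: (@onesub_neq0' (c' + d).+1); rewrite -!exprD; congr (_ ^+ _); lia.
- by apply: (@onesub_neq0' (c' + c' + d).+2); rewrite -exprM -!exprD; congr (_ ^+ _); lia.
- by apply: (@onesub_neq0' (c' + c' + d).+3); rewrite -exprM -!exprD; congr (_ ^+ _); lia.
- by rewrite qfS exprSr.
- by rewrite qfS -exprD addn2.
- by rewrite qfS -!exprD; congr (_ * (1 - _ ^+ _)); lia.
- by rewrite qfS -exprM -!exprD; congr (_ * (1 - _ ^+ _)); lia.
- by rewrite qfS.
- by rewrite -exprM -!exprD; congr (1 - _ ^+ _); lia.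
Qed.
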